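(* Let $f:2^V\to\mathbb{Z}_{\ge0}$ be a connectivity function, $W\subseteq V$, and $(C_1,C_2,C_3)$ a minimum $W$-improvement of arity 3. Then for every $i,j\in\{1,2,3\}$ and every set $P$ with $C_i\subseteq P\subseteq C_i\cup(W\cap C_j)$, it holds that $f(P)\ge f(C_i)$.
   Context: A connectivity function $f:2^V\to\mathbb{Z}_{\ge0}$ ($V$ finite) satisfies $f(\emptyset)=0$, $f(X)=f(V\setminus X)$, and $f(X\cup Y)+f(X\cap Y)\le f(X)+f(Y)$. For $W\subseteq V$, a $W$-improvement is a tripartition $(C_1,C_2,C_3)$ of $V$ (pairwise disjoint, possibly empty, union $V$) with $f(C_i)<f(W)/2$, $f(C_i\cap W)<f(W)$, $f(C_i\cap(V\setminus W))<f(W)$ for each $i$. Its width is $\max_i f(C_i)$, its sum-width is $\sum_i f(C_i)$, and its arity is the number of nonempty $C_i$. A $W$-improvement is minimum if it has minimum width among all $W$-improvements, subject to that minimum arity, and subject to those minimum sum-width. *)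

(* Defs.v *)
From mathcomp Require Import all_boot.
Set Implicit Arguments. Unset Strict Implicit. Unset Printing Implicit Defensive.

Definition connectivity (V : finType) (f : {set V} -> nat) : Prop :=
  [/\ f set0 = 0,
      forall X, f X = f (~: X) &
      forall X Y, f (X :|: Y) + f (X :&: Y) <= f X + f Y].

(* A tripartition of V, indexed by 'I_3 (C i is the part C_{i+1}). *)
Definition tripartition (V : finType) (C : 'I_3 -> {set V}) : Prop :=
  (forall i j, i != j -> [disjoint C i & C j]) /\
  \bigcup_(i < 3) C i = [set: V].

(* W-improvement; f(C_i) < f(W)/2 is written 2 * f(C_i) < f(W). *)
Definition improvement (V : finType) (f : {set V} -> nat) (W : {set V})
    (C : 'I_3 -> {set V}) : Prop :=
  tripartition C /\
  forall i, [/\ 2 * f (C i) < f W, f (C i :&: W) < f W &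
                f (C i :&: ~: W) < f W].

Definition width (V : finType) (f : {set V} -> nat) (C : 'I_3 -> {set V}) :=
  \max_(i < 3) f (C i).
Definition sumwidth (V : finType) (f : {set V} -> nat) (C : 'I_3 -> {set V}) :=
  \sum_(i < 3) f (C i).
Definition arity (V : finType) (C : 'I_3 -> {set V}) :=
  #|[set i : 'I_3 | C i != set0]|.

Definition min_improvement (V : finType) (f : {set V} -> nat) (W : {set V})
    (C : 'I_3 -> {set V}) : Prop :=
  improvement f W C /\
  forall D, improvement f W D ->
    width f C < width f D \/
    (width f C = width f D /\
     (arity C < arity D \/
      (arity C = arity D /\ sumwidth f C <= sumwidth f D))).

(* Main.v *)
Require Import Defs.
From mathcomp Require Import all_boot.
From mathcomp Require Import zify.

Set Implicit Arguments. Unset Strict Implicit. Unset Printing Implicit Defensive.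

Section Aux.
Variable V : finType.
Variable f : {set V} -> nat.
Hypothesis hc : connectivity f.

Lemma fT : f setT = 0.
Proof. case: hc => f0 hs _. by rewrite hs setCT. Qed.

Lemma posi X Y : f (X :&: ~: Y) + f (Y :&: ~: X) <= f X + f Y.
Proof.
case: hc => _ hs hsub.
have := hsub X (~: Y).
rewrite -(hs Y) (hs (X :|: ~: Y)) setCU setCK setIC.
by rewrite addnC.
Qed.

Lemma subm X Y : f (X :|: Y) + f (X :&: Y) <= f X + f Y.
Proof. by case: hc. Qed.

Lemma symm X : f (~: X) = f X.
Proof. by case: hc => _ hs _; rewrite -hs. Qed.
End Aux.

Theorem lemma9 (V : finType) (f : {set V} -> nat) (W : {set V})
    (C : 'I_3 -> {set V}) :
  connectivity f ->
  min_improvement f W C ->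
  arity C = 3 ->
  forall (i j : 'I_3) (P : {set V}),
    C i \subset P -> P \subset C i :|: (W :&: C j) ->
    f (C i) <= f P.
Proof.
move=> hc [[[hdisj hcov] himp] hmin] har i j P hiP hPi.
case: (eqVneq i j) => [eij|hij]; first subst j.
  have -> : P = C i.
    apply/eqP; rewrite eqEsubset hiP andbT; apply: (subset_trans hPi).
    by rewrite subUset subxx subsetIr.
  by [].
rewrite leqNgt; apply/negP => hlt.
have hd : forall l m x, l != m -> x \in C l -> x \in C m -> False.
  move=> l m x hlm h1 h2; have := disjoint_setI0 (hdisj _ _ hlm).
  by move/setP/(_ x); rewrite !inE h1 h2.
have hcv : forall x, exists l, x \in C l.
  move=> x; have : x \in \bigcup_(l < 3) C l by rewrite hcov inE.
  by case/bigcupP => l _ hl; exists l.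
have hPx : forall x, x \in P -> x \in C i \/ (x \in W /\ x \in C j).
  move=> x /(subsetP hPi); rewrite !inE => /orP[->|/andP[-> ->]]; [by left|by right].
have hiPx : forall x, x \in C i -> x \in P by apply: (subsetP hiP).
have e1 : P :&: ~: C j = C i.
  apply/setP => x; rewrite !inE; apply/idP/idP.
    case/andP => hx hnx; case: (hPx x hx) => // [[_ hh]]; by rewrite hh in hnx.
  move=> hx; rewrite hiPx //=; apply/negP => hx2; exact: (hd i j x hij hx hx2).
have e2 : P :&: ~: (C j :&: W) = C i.
  apply/setP => x; rewrite !inE; apply/idP/idP.
    case/andP => hx hnx; case: (hPx x hx) => // [[h1 h2]]; by rewrite h1 h2 in hnx.
  move=> hx; rewrite hiPx //=; apply/negP => /andP[hx2 _]; exact: (hd i j x hij hx hx2).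
have e3 : P :|: W = C i :|: W.
  apply/setP => x; rewrite !inE; apply/idP/idP.
    case/orP => [hx|->]; last by rewrite orbT.
    by case: (hPx x hx) => [->|[-> _]] //; rewrite orbT.
  by case/orP => [hx|->]; [rewrite hiPx | rewrite orbT].
have e4 : P :&: ~: W = C i :&: ~: W.
  apply/setP => x; rewrite !inE; apply/idP/idP.
    case/andP => hx hnx; case: (hPx x hx) => [->//|[hw _]]; by rewrite hw in hnx.
  by case/andP => hx ->; rewrite hiPx.
have e5 : (C j :\: P) :&: ~: W = C j :&: ~: W.
  apply/setP => x; rewrite !inE; apply/idP/idP; first by case/andP => /andP[_ ->] ->.
  case/andP => hx hnw; rewrite hx hnw !andbT; apply/negP => hp.
  case: (hPx x hp) => [hi|[hw _]]; first exact: (hd i j x hij hi hx).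
  by rewrite hw in hnw.
have e6 : (C j :\: P) :&: W = (C j :&: W) :&: ~: P.
  by apply/setP => x; rewrite !inE; case: (x \in P); case: (x \in C j); case: (x \in W).
have e7 : forall l, l != i -> l != j -> C l :\: P = C l.
  move=> l hli hlj; apply/setP => x; rewrite !inE; apply/idP/idP; first by case/andP.
  move=> hx; rewrite hx andbT; apply/negP => hp.
  case: (hPx x hp) => [hi|[_ hj]].
    by apply: (hd l i x hli).
  by apply: (hd l j x hlj).
have p1 := posi hc (C j) P. rewrite e1 in p1.
have p2 := posi hc (C j :&: W) P. rewrite e2 in p2.
have p2' : f (C j :&: W :&: ~: P) <= f (C j :&: W).
  lia.
have p1' : f (C j :&: ~: P) <= f (C j).
  lia.
have s1 := subm hc P W. rewrite e3 in s1.
have hw : forall l, [/\ 2 * f (C l) < f W, f (C l :&: W) < f W & f (C l :&: ~: W) < f W].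
  exact: himp.
have [hwi1 hwi2 hwi3] := hw i.
have arD : forall D : 'I_3 -> {set V}, arity D <= 3.
  by move=> D; rewrite /arity; apply: leq_trans (max_card _) _; rewrite card_ord.
case: (ltnP (f (P :&: W)) (f W)) => hPW.
-
  pose D := fun l => if l == i then P else C l :\: P.
  have Dle : forall l, l != i -> f (D l) <= f (C l) /\ f (D l :&: W) < f W /\
                                   f (D l :&: ~: W) < f W.
    move=> l hl; rewrite /D (negbTE hl).
    case: (eqVneq l j) => [->|hlj].
      have [_ h2 h3] := hw j.
      rewrite e5 e6 setDE; split => //; split; [exact: leq_ltn_trans p2' h2 | done].
    have [h1 h2 h3] := hw l.
    by rewrite e7.
  have impD : improvement f W D.
    split.
      split.
        move=> l m hlm; rewrite /D.
        case: (eqVneq l i) => [el|hli]; case: (eqVneq m i) => [em|hmi];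
          rewrite -setI_eq0; apply/eqP/setP => x; rewrite !inE.
        - by subst; rewrite eqxx in hlm.
        - by case: (x \in P); rewrite ?andbF.
        - by case: (x \in P); rewrite ?andbF.
        - apply/negP => /andP[/andP[_ h1] /andP[_ h2]].
          exact: (hd l m x hlm h1 h2).
      apply/setP => x; rewrite inE; apply/bigcupP.
      case: (boolP (x \in P)) => hxP; first by exists i => //; rewrite /D eqxx.
      have [l hl] := hcv x.
      have hli : l != i by apply/negP => /eqP hli; subst l; rewrite hiPx in hxP.
      by exists l => //; rewrite /D (negbTE hli) !inE hxP.
    move=> l; case: (eqVneq l i) => [->|hli].
      rewrite /D eqxx e4; split => //; lia.
    have [h1 [h2 h3]] := Dle l hli; split => //.
    have [h4 _ _] := hw l; lia.
  case: (hmin D impD) => [|[hwid [|[_]]]].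
  + rewrite ltnNge => /negP; apply; apply/bigmax_leqP => l _.
    case: (eqVneq l i) => [->|hli].
      rewrite /D eqxx; apply: leq_trans (ltnW hlt) _; exact: leq_bigmax.
    have [h1 _] := Dle l hli; apply: leq_trans h1 _; exact: leq_bigmax.
  + by rewrite har ltnNge arD.
  + apply/negP; rewrite -ltnNge /sumwidth (bigD1 i) //= [X in _ < X](bigD1 i) //=.
    rewrite {1}/D eqxx -addSn; apply: leq_add => //.
    by apply: leq_sum => l hl; case: (Dle l hl).
-
  have s2 := subm hc (W :|: C i) (~: C i :|: W).
  have e8 : (W :|: C i) :|: (~: C i :|: W) = setT.
    by apply/setP => x; rewrite !inE; case: (x \in C i); rewrite ?orbT.
  have e9 : (W :|: C i) :&: (~: C i :|: W) = W.
    by apply/setP => x; rewrite !inE; case: (x \in C i); case: (x \in W).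
  have e10 : f (~: C i :|: W) = f (C i :&: ~: W).
    by rewrite -(symm hc) setCU setCK.
  rewrite e8 e9 e10 (fT hc) setUC in s2.
  have p3 := posi hc W (C i).
  pose D := fun l : 'I_3 => if l == i then C i else if l == j then ~: C i else set0.
  have impD : improvement f W D.
    split.
      split.
        move=> l m hlm; rewrite /D.
        case: (eqVneq l i) => [el|hli]; case: (eqVneq m i) => [em|hmi].
        - by subst; rewrite eqxx in hlm.
        - case: (m == j); rewrite -setI_eq0; apply/eqP/setP => x; rewrite !inE ?andbF //.
          by case: (x \in C i).
        - case: (l == j); rewrite -setI_eq0; apply/eqP/setP => x; rewrite !inE ?andbF //.
          by case: (x \in C i).
        - case: (eqVneq l j) => [el|hlj]; case: (eqVneq m j) => [em|hmj];
            rewrite -setI_eq0; apply/eqP/setP => x; rewrite !inE ?andbF //.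
          by subst; rewrite eqxx in hlm.
      apply/setP => x; rewrite inE; apply/bigcupP.
      case: (boolP (x \in C i)) => hx; first by exists i => //; rewrite /D eqxx.
      by exists j => //; rewrite /D eq_sym (negbTE hij) eqxx inE.
    move=> l; rewrite /D; case: (eqVneq l i) => [_|hli]; first by split.
    case: (eqVneq l j) => [_|hlj].
      rewrite symm //; split => //.
        rewrite setIC; lia.
      rewrite -setCU symm //; lia.
    have f0 : f set0 = 0 by case: hc.
    rewrite !set0I f0; split; lia.
  have arD2 : arity D <= 2.
    rewrite /arity; apply: leq_trans (subset_leq_card (B := [set i; j]) _) _.
      apply/subsetP => l; rewrite !inE /D.
      by case: (l == i); case: (l == j); rewrite ?eqxx ?orbT.
    by rewrite cards2; case: (i != j).
  case: (hmin D impD) => [|[hwid [|[ha _]]]].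
  + rewrite ltnNge => /negP; apply; apply/bigmax_leqP => l _.
    have hb : f (C i) <= width f C by exact: leq_bigmax.
    have f0 : f set0 = 0 by case: hc.
    rewrite /D; case: (l == i); first exact: hb.
    case: (l == j); first by rewrite symm.
    by rewrite f0.
  + by rewrite har ltnNge (leq_trans arD2).
  + by move: arD2; rewrite -ha har.
Qed.
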